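(* Fix a block length $N>0$, transmission rates $R_1,R_2\ge 0$, transmit powers $P_1,P_2>0$ and noise powers $\sigma_1^2,\sigma_2^2>0$. For channel gains $g_1=|h_1|^2>0$ and $g_2=|h_2|^2>0$ define the SINRs/SNR $$\gamma_2^1=\frac{g_1P_2}{g_1P_1+\sigma_1^2},\qquad \gamma_1^1=\frac{g_1P_1}{\sigma_1^2},\qquad {\gamma_1^1}'=\frac{g_1P_1}{g_1P_2+\sigma_1^2},\qquad \gamma_2^2=\frac{g_2P_2}{g_2P_1+\sigma_2^2},$$ the (approximate) decoding error probabilities $$\epsilon_2^1=Q(f(\gamma_2^1,N,R_2)),\quad \epsilon_1^1=Q(f(\gamma_1^1,N,R_1)),\quad {\epsilon_1^1}'=Q(f({\gamma_1^1}',N,R_1)),\quad \epsilon_2=Q(f(\gamma_2^2,N,R_2)),$$ the effective decoding error probability at user 1 $$\epsilon_1=\begin{cases}\epsilon_1^1(1-\epsilon_2^1)+{\epsilon_1^1}'\epsilon_2^1, & R_1\le \log_2(1+{\gamma_1^1}'),\\ \epsilon_1^1(1-\epsilon_2^1)+\epsilon_2^1, & \log_2(1+{\gamma_1^1}')\le R_1\le \log_2(1+\gamma_1^1),\end{cases}$$ and the effective throughputs $T_1=R_1(1-\epsilon_1)$ and $T_2=R_2(1-\epsilon_2)$. Then, with all other variables fixed, $T_1$ is a monotonically increasing function of the channel gain $g_1=|h_1|^2$ (wherever $T_1$ is defined, i.e. $R_1\le\log_2(1+\gamma_1^1)$), and $T_2$ is a monotonically increasing function of the channel gain $g_2=|h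_2|^2$.
   Context: $Q(x)=\frac{1}{\sqrt{2\pi}}\int_x^\infty e^{-t^2/2}\,dt$ is the Gaussian tail function, and $f(x,y,z)=\ln 2\,\sqrt{\frac{y}{1-(1+x)^{-2}}}\,\bigl(\log_2(1+x)-z\bigr)$ for $x>0$. Setting: a two-user downlink NOMA short-packet system in which an access point sends superposed symbols with powers $P_1$ (to user 1, the stronger user, which performs successive interference cancellation) and $P_2$ (to user 2) at rates $R_1,R_2$ over blocks of length $N$; $h_i$ is the channel coefficient to user $i$ and $\sigma_i^2$ the noise power at user $i$. *)

(* Defs.v *)
From Stdlib Require Import Reals.
From Coquelicot Require Import Coquelicot.
Open Scope R_scope.

Definition Qfun (x : R) : R :=
  / sqrt (2 * PI) *
  RInt_gen (fun t => exp (- (t ^ 2) / 2)) (at_point x) (Rbar_locally p_infty).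

Definition log2 (x : R) : R := ln x / ln 2.

Definition ffun (x y z : R) : R :=
  ln 2 * sqrt (y / (1 - / ((1 + x) ^ 2))) * (log2 (1 + x) - z).

Section Model.
Variables (N R1 R2 P1 P2 s1 s2 : R).

Definition gamma21 (g1 : R) : R := g1 * P2 / (g1 * P1 + s1).
Definition gamma11 (g1 : R) : R := g1 * P1 / s1.
Definition gamma11' (g1 : R) : R := g1 * P1 / (g1 * P2 + s1).
Definition gamma22 (g2 : R) : R := g2 * P2 / (g2 * P1 + s2).

Definition eps21 (g1 : R) : R := Qfun (ffun (gamma21 g1) N R2).
Definition eps11 (g1 : R) : R := Qfun (ffun (gamma11 g1) N R1).
Definition eps11' (g1 : R) : R := Qfun (ffun (gamma11' g1) N R1).
Definition eps2 (g2 : R) : R := Qfun (ffun (gamma22 g2) N R2).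

(* Effective error at user 1: first case when R1 <= log2(1+gamma11'),
   second case otherwise (meaningful when R1 <= log2(1+gamma11)). *)
Definition eps1 (g1 : R) : R :=
  if Rle_dec R1 (log2 (1 + gamma11' g1))
  then eps11 g1 * (1 - eps21 g1) + eps11' g1 * eps21 g1
  else eps11 g1 * (1 - eps21 g1) + eps21 g1.

Definition T1 (g1 : R) : R := R1 * (1 - eps1 g1).
Definition T2 (g2 : R) : R := R2 * (1 - eps2 g2).
End Model.

(* Main.v *)
Require Import Defs.
From Stdlib Require Import Reals Lra Psatz Classical.
From Coquelicot Require Import Coquelicot.
From mathcomp Require all_boot all_order all_algebra.
From mathcomp Require all_classical all_reals all_analysis.
From mathcomp Require Rstruct Rstruct_topology measurable_realfun.
Set Warnings "-notation-overridden,-ambiguous-paths,-notation-incompatible-prefix".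
Open Scope R_scope.

Definition gg (t : R) : R := exp (- (t ^ 2)).

Lemma gg_cont (x : R) : continuity_pt gg x.
Proof. unfold gg; reg. Qed.

Lemma gg_exRInt (a b : R) : ex_RInt gg a b.
Proof.
apply (@ex_RInt_continuous R_CompleteNormedModule); intros z _.
apply continuity_pt_filterlim, gg_cont.
Qed.

Lemma gg_der (a x : R) : derivable_pt_lim (fun y => RInt gg a y) x (gg x).
Proof.
apply is_derive_Reals.
apply (is_derive_RInt gg (fun y => RInt gg a y) a x).
- apply filter_forall; intros y. apply (@RInt_correct R_CompleteNormedModule), gg_exRInt.
- apply continuity_pt_filterlim, gg_cont.
Qed.

Module Bridge.
Import all_boot all_order all_algebra all_classical all_reals all_analysis Rstruct Rstruct_topology measurable_realfun.
Import Order.TTheory GRing.Theory Num.Theory.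
Import numFieldNormedType.Exports.
Local Open Scope classical_set_scope.
Local Open Scope ring_scope.

Lemma der_bridge (F : R^o -> R^o) (x l : R^o) : derivable_pt_lim F x l ->
  derivable F x 1 /\ 'D_1 F x = l.
Proof.
move=> HF.
have H : (fun h : R^o => h^-1 *: (F (h *: 1 + x) - F x)) @ 0^' --> l.
  apply/cvgrPdist_lt => e /RltP e0.
  have [d Hd] := HF e e0.
  exists (pos d) => /=; first by apply/RltP; exact: (cond_pos d).
  move=> h /= hd hne0.
  have hne0' : h <> 0%R by apply/eqP.
  rewrite sub0r normrN in hd.
  have hd' : (Rabs h < d)%coqR by apply/RltP.
  have := Hd h hne0' hd'.
  rewrite !RealsE => /RltP.
  by rewrite distrC mulrC (addrC x) /GRing.scale /= mulr1.
split; first by apply/cvg_ex; exists l.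
by apply/cvg_lim.
Qed.

Lemma FTC2_bridge (f F : R^o -> R^o) (a b : R^o) : (a < b)%coqR ->
  (forall x, continuity_pt f x) -> (forall x, derivable_pt_lim F x (f x)) ->
  (\int[@lebesgue_measure R]_(x in `[a, b]) (f x)%:E = (F b - F a)%:E)%E.
Proof.
move=> /RltP ab cf dF.
have cF : forall x, {for x, continuous F}.
  move=> x; apply/continuity_pt_cvg.
  apply: derivable_continuous_pt; exists (f x); exact: dF.
rewrite EFinB.
apply: continuous_FTC2 => //.
- apply: continuous_subspaceT => x; exact/continuity_pt_cvg.
- split.
  + move=> x _; exact ((der_bridge _ _ _ (dF x)).1).
  + apply: cvg_at_right_filter; exact: cF.
  + apply: cvg_at_left_filter; exact: cF.
- move=> x _; rewrite derive1E; exact: (der_bridge _ _ _ (dF x)).2.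
Qed.

Lemma cont_inv1sq (x : R) : continuity_pt (fun x => Rinv (1 + x^2)%coqR) x.
Proof.
apply continuity_pt_inv; first by reg.
have := pow2_ge_0 x; move=> h; lra.
Qed.

Lemma pi_PI : (pi : R) = PI.
Proof.
have H1 := FTC2_bridge (fun x => Rinv (1 + x^2)%coqR) Ratan.atan 0 1 Rlt_0_1 cont_inv1sq
  derivable_pt_lim_atan.
rewrite atan_1 atan_0 in H1.
have H2 : (\int[@lebesgue_measure R]_(x in `[0%R, 1%R]) ((1 + x ^+ 2)^-1)%R%:E =
    (trigo.atan 1 - trigo.atan 0)%:E)%E.
  apply: continuous_FTC2 => //.
  - apply: continuous_subspaceT => x.
    have := cont_inv1sq x; rewrite continuity_pt_cvg.
    by rewrite (_ : (fun x : R => Rinv (1 + x^2)%coqR) = (fun x : R => (1 + x ^+ 2)^-1))//; apply/funext => y; rewrite RinvE RpowE.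
  - split.
    + move=> x _; exact: derivable_atan.
    + apply: cvg_at_right_filter; exact: continuous_atan.
    + apply: cvg_at_left_filter; exact: continuous_atan.
  - move=> x _; exact: derive1_atan.
have E : (fun x : R => (Rinv (1 + x^2)%coqR)%:E) = (fun x : R => ((1 + x ^+ 2)^-1)%:E).
  by apply/funext => x; rewrite RinvE RpowE.
rewrite E H2 atan1 atan0 in H1.
move: H1 => [] /eqP. rewrite !RealsE subr0 subr0 => /eqP h.
have h4 : (nat_of_pos 4)%:R = 4%:R :> R by [].
rewrite h4 in h.
have : pi / 4%:R * 4%:R = PI / 4%:R * 4%:R :> R by rewrite h.
by rewrite !divfK // pnatr_eq0.
Qed.

Lemma gauss_bound (a b : R) : (a <= b)%coqR -> (RInt gg a b <= sqrt PI)%coqR.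
Proof.
move=> ab; case: (Rle_lt_or_eq_dec _ _ ab) => [{}ab|<-]; last first.
  rewrite RInt_point; exact: sqrt_pos.
have H := FTC2_bridge gg (fun y => RInt gg a y) a b ab gg_cont (gg_der a).
rewrite RInt_point in H.
have E : (fun x : R => (gg x)%:E) = (fun x : R => (gauss_fun x)%:E).
  by apply/funext => x; rewrite /gg RexpE RpowE.
rewrite E in H.
have L : (\int[@lebesgue_measure R]_(x in `[a, b]) (gauss_fun x)%:E <=
          \int[@lebesgue_measure R]_(x in [set: R]) (gauss_fun x)%:E)%E.
  apply: ge0_subset_integral => //.
  - apply/measurable_EFinP; exact: measurable_gauss_fun.
  - move=> x _; rewrite lee_fin; exact: gauss_fun_ge0.
rewrite H integralT_gauss lee_fin subr0 in L.
by apply/RleP; rewrite RsqrtE -pi_PI.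
Qed.
End Bridge.

Definition hh (t : R) : R := exp (- (t ^ 2) / 2).

Lemma hh_exRInt (a b : R) : ex_RInt hh a b.
Proof.
apply (@ex_RInt_continuous R_CompleteNormedModule); intros z _.
apply continuity_pt_filterlim. unfold hh; reg.
Qed.

Lemma hh_pos t : 0 <= hh t.
Proof. unfold hh. left; apply exp_pos. Qed.

Lemma hh_bound (a b : R) : a <= b -> RInt hh a b <= sqrt (2 * PI).
Proof.
intros ab.
set (u := / sqrt 2).
assert (s2 : 0 < sqrt 2) by (apply sqrt_lt_R0; lra).
assert (u0 : 0 < u) by (apply Rinv_0_lt_compat; exact s2).
assert (Hs : sqrt 2 * sqrt 2 = 2) by (apply sqrt_sqrt; lra).
assert (E : forall y, hh y = sqrt 2 * (u * gg (u * y + 0))).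
{ intros y. unfold hh, gg, u.
  replace ((/ sqrt 2 * y + 0) ^ 2) with (y^2 / (sqrt 2 * sqrt 2)) by (field; lra).
  rewrite Hs, <- Rmult_assoc, Rinv_r, Rmult_1_l by lra.
  f_equal; field. }
rewrite (RInt_ext hh (fun y => sqrt 2 * (u * gg (u * y + 0)))) by (intros; apply E).
rewrite (RInt_scal (V:=R_CompleteNormedModule) (fun y => u * gg (u * y + 0))).
2:{ apply (@ex_RInt_continuous R_CompleteNormedModule); intros z _.
    apply continuity_pt_filterlim. unfold gg; reg. }
pose proof (RInt_comp_lin (V:=R_CompleteNormedModule) gg u 0 a b) as H.
simpl in H. unfold scal in H; simpl in H. unfold mult in H; simpl in H.
unfold scal; simpl; unfold mult; simpl.
rewrite H.
2:{ apply (@ex_RInt_continuous R_CompleteNormedModule); intros z _.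
    apply continuity_pt_filterlim. unfold gg; reg. }
rewrite sqrt_mult; [| lra | left; apply PI_RGT_0].
apply Rmult_le_compat_l; [lra|].
apply Bridge.gauss_bound. nra.
Qed.

Definition IG (b : R) : R := RInt hh 0 b.

Lemma IG_diff (a b : R) : RInt hh a b = IG b - IG a.
Proof.
unfold IG.
pose proof (RInt_Chasles (V:=R_CompleteNormedModule) hh 0 a b (hh_exRInt _ _) (hh_exRInt _ _)) as H.
change (RInt hh 0 a + RInt hh a b = RInt hh 0 b) in H. lra.
Qed.

Lemma IG_mono (a b : R) : a <= b -> IG a <= IG b.
Proof.
intros ab.
assert (0 <= RInt hh a b).
{ apply RInt_ge_0; [exact ab | apply hh_exRInt | intros; apply hh_pos]. }
rewrite IG_diff in H. lra.
Qed.

Lemma IG_bound (x b : R) : IG b <= IG x + sqrt (2 * PI).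
Proof.
destruct (Rle_or_lt x b) as [xb|bx].
- pose proof (hh_bound x b xb). rewrite IG_diff in H. lra.
- pose proof (IG_mono b x (Rlt_le _ _ bx)).
  pose proof (sqrt_pos (2 * PI)). lra.
Qed.

Definition IGset (y : R) : Prop := exists b, y = IG b.

Lemma IGset_bound : bound IGset.
Proof. exists (IG 0 + sqrt (2 * PI)). intros y [b ->]. apply IG_bound. Qed.

Lemma IGset_ne : exists y, IGset y.
Proof. exists (IG 0). exists 0. reflexivity. Qed.

Definition Lsup : R := proj1_sig (completeness IGset IGset_bound IGset_ne).

Lemma Lsup_lub : is_lub IGset Lsup.
Proof. unfold Lsup. destruct completeness as [m Hm]. exact Hm. Qed.

Lemma IG_le_L b : IG b <= Lsup.
Proof. apply Lsup_lub. exists b. reflexivity. Qed.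

Lemma L_le x : Lsup <= IG x + sqrt (2 * PI).
Proof. apply Lsup_lub. intros y [b ->]. apply IG_bound. Qed.

Lemma L_approx (eps : R) : 0 < eps -> exists b0, Lsup - eps < IG b0.
Proof.
intros He.
destruct (Rlt_or_le (Lsup - eps) Lsup) as [_|]; [|lra].
apply not_all_not_ex. intros Hn.
assert (Lsup <= Lsup - eps).
{ apply Lsup_lub. intros y [b ->]. specialize (Hn b). lra. }
lra.
Qed.

Lemma hh_gen (x : R) :
  is_RInt_gen hh (at_point x) (Rbar_locally p_infty) (Lsup - IG x).
Proof.
intros P [eps HP].
destruct (L_approx eps (cond_pos eps)) as [b0 Hb0].
apply (Filter_prod _ _ _ (fun a => a = x) (fun b => b0 < b)).
- reflexivity.
- exists b0. intros; assumption.
- intros a b -> Hb. exists (RInt hh x b). split.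
  + apply (@RInt_correct R_CompleteNormedModule), hh_exRInt.
  + apply HP. rewrite IG_diff.
    pose proof (IG_mono b0 b (Rlt_le _ _ Hb)). pose proof (IG_le_L b).
    change (Rabs ((IG b - IG x) - (Lsup - IG x)) < eps).
    apply Rabs_def1; lra.
Qed.

Lemma Q_eq (x : R) : Qfun x = / sqrt (2 * PI) * (Lsup - IG x).
Proof.
unfold Qfun. f_equal.
apply (is_RInt_gen_unique (V:=R_CompleteNormedModule)).
exact (hh_gen x).
Qed.

Lemma ln_gt_0 x : 1 < x -> 0 < ln x.
Proof. intros H. rewrite <- ln_1. apply ln_increasing; lra. Qed.


Definition phi (c u : R) : R := u * (ln u - c) / sqrt (u * u - 1).

Lemma phi_der (c u : R) : 1 < u ->
  is_derive (phi c) u ((u * u - 1 - ln u + c) / (sqrt (u * u - 1) * sqrt (u * u - 1) * sqrt (u * u - 1))).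
Proof.
intros Hu. unfold phi.
assert (Hs : 0 < sqrt (u*u-1)) by (apply sqrt_lt_R0; nra).
assert (Hss : sqrt (u*u-1) * sqrt (u*u-1) = u*u-1) by (apply sqrt_sqrt; nra).
auto_derive.
- - change (u * u + - (1)) with (u * u - 1). repeat split; try lra. nra.
- change (u * u + - (1)) with (u * u - 1).
  set (s := sqrt (u * u - 1)) in *. clearbody s.
  transitivity ((u * u - 1 - ln u + c) / (s * s * s) + (ln u - c + 1) * (s*s - (u*u-1)) / (s*s*s)).
  + field. split; lra.
  + replace (s*s - (u*u-1)) with 0 by lra. field. lra.
Qed.

Lemma ln_lt_sub1 (u : R) : 1 < u -> ln u < u - 1.
Proof.
intros Hu.
assert (H0 : 0 < ln u) by (apply ln_gt_0; lra).
pose proof (exp_ineq1 (ln u) (Rgt_not_eq _ _ H0)) as H. rewrite exp_ln in H by lra. lra.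
Qed.

Lemma phi_mono (c u v : R) : 0 <= c -> 1 < u -> u <= v -> phi c u <= phi c v.
Proof.
intros Hc Hu Huv.
destruct (Rle_lt_or_eq_dec _ _ Huv) as [H|<-]; [|lra].
left.
apply (incr_function (phi c) 1 p_infty (fun u => (u * u - 1 - ln u + c) / (sqrt (u * u - 1) * sqrt (u * u - 1) * sqrt (u * u - 1)))); simpl; auto; try lra.
- intros x Hx _. apply phi_der; exact Hx.
- intros x Hx _.
  assert (Hs : 0 < sqrt (x*x-1)) by (apply sqrt_lt_R0; nra).
  pose proof (ln_lt_sub1 x Hx).
  apply Rdiv_lt_0_compat; [nra|].
  repeat apply Rmult_lt_0_compat; assumption.
Qed.


Lemma ffun_eq x y z : 0 < x -> 0 <= y -> ffun x y z = sqrt y * phi (z * ln 2) (1 + x).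
Proof.
intros Hx Hy. unfold ffun, phi, log2.
set (u := 1 + x).
assert (Hu : 1 < u) by (unfold u; lra).
clearbody u.
assert (Hs : 0 < sqrt (u*u-1)) by (apply sqrt_lt_R0; nra).
assert (Hss : sqrt (u*u-1) * sqrt (u*u-1) = u*u-1) by (apply sqrt_sqrt; nra).
assert (Hl2 : 0 < ln 2) by (apply ln_gt_0; lra).
replace (y / (1 - / u ^ 2)) with (y * ((u / sqrt (u*u-1)) * (u / sqrt (u*u-1)))).
2:{ replace ((u / sqrt (u*u-1)) * (u / sqrt (u*u-1))) with (u * u / (sqrt (u*u-1) * sqrt (u*u-1))) by (field; lra).
    rewrite Hss. field. split; nra. }
rewrite sqrt_mult; [| lra | nra].
rewrite sqrt_square.
2:{ apply Rlt_le, Rdiv_lt_0_compat; lra. }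
field. split; lra.
Qed.

Lemma ffun_mono x x' y z : 0 < x -> x <= x' -> 0 <= y -> 0 <= z -> ffun x y z <= ffun x' y z.
Proof.
intros Hx Hxx Hy Hz.
rewrite (ffun_eq x), (ffun_eq x'); try lra.
apply Rmult_le_compat_l; [apply sqrt_pos|].
apply phi_mono; try lra.
assert (0 < ln 2) by (apply ln_gt_0; lra). nra.
Qed.

Lemma sq2pi_pos : 0 < sqrt (2 * PI).
Proof. apply sqrt_lt_R0. pose proof PI_RGT_0. lra. Qed.

Lemma Q_anti x y : x <= y -> Qfun y <= Qfun x.
Proof.
intros H. rewrite !Q_eq. pose proof (IG_mono _ _ H).
pose proof (Rinv_0_lt_compat _ sq2pi_pos). nra.
Qed.

Lemma Q_ge0 x : 0 <= Qfun x.
Proof.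
rewrite Q_eq. pose proof (IG_le_L x).
pose proof (Rinv_0_lt_compat _ sq2pi_pos). nra.
Qed.

Lemma Q_le1 x : Qfun x <= 1.
Proof.
rewrite Q_eq. pose proof (L_le x). pose proof sq2pi_pos.
pose proof (Rinv_0_lt_compat _ sq2pi_pos).
replace 1 with (/ sqrt (2 * PI) * sqrt (2 * PI)) by (field; lra).
apply Rmult_le_compat_l; lra.
Qed.

Lemma div_le_compat (a b c d : R) : 0 < b -> 0 < d -> a * d <= c * b -> a / b <= c / d.
Proof.
intros Hb Hd H.
replace (a / b) with ((a * d) * / (b * d)) by (field; lra).
replace (c / d) with ((c * b) * / (b * d)) by (field; lra).
apply Rmult_le_compat_r; [|exact H].
left; apply Rinv_0_lt_compat; nra.
Qed.

Lemma epsQ_mono (x x' y z : R) : 0 < x -> x <= x' -> 0 <= y -> 0 <= z ->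
  Qfun (ffun x' y z) <= Qfun (ffun x y z).
Proof. intros. apply Q_anti, ffun_mono; assumption. Qed.

Lemma log2_mono x y : 0 < x -> x <= y -> log2 x <= log2 y.
Proof.
intros Hx Hxy. unfold log2.
assert (0 < ln 2) by (apply ln_gt_0; lra).
destruct (Rle_lt_or_eq_dec _ _ Hxy) as [H'|<-]; [|lra].
pose proof (ln_increasing _ _ Hx H').
apply Rmult_le_compat_r; [left; apply Rinv_0_lt_compat; lra | lra].
Qed.

Theorem proposition1 (N : nat) (R1 R2 P1 P2 s1 s2 : R) :
  (0 < N)%nat -> 0 <= R1 -> 0 <= R2 -> 0 < P1 -> 0 < P2 -> 0 < s1 -> 0 < s2 ->
  (forall g1 g1' : R, 0 < g1 -> g1 <= g1' ->
     R1 <= log2 (1 + gamma11 P1 s1 g1) ->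
     R1 <= log2 (1 + gamma11 P1 s1 g1') ->
     T1 (INR N) R1 R2 P1 P2 s1 g1 <= T1 (INR N) R1 R2 P1 P2 s1 g1') /\
  (forall g2 g2' : R, 0 < g2 -> g2 <= g2' ->
     T2 (INR N) R2 P1 P2 s2 g2 <= T2 (INR N) R2 P1 P2 s2 g2').
Proof.
intros HN HR1 HR2 HP1 HP2 Hs1 Hs2.
assert (HNr : 0 <= INR N) by apply pos_INR.
split.
- intros g g' Hg Hgg' _ _.
  assert (Hg' : 0 < g') by lra.
  assert (G21p : 0 < gamma21 P1 P2 s1 g) by (unfold gamma21; apply Rdiv_lt_0_compat; nra).
  assert (G11p : 0 < gamma11 P1 s1 g) by (unfold gamma11; apply Rdiv_lt_0_compat; nra).
  assert (G11'p : 0 < gamma11' P1 P2 s1 g) by (unfold gamma11'; apply Rdiv_lt_0_compat; nra).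
  assert (D1 : 0 <= (g' - g) * P1) by (apply Rmult_le_pos; lra).
  assert (D2 : 0 <= (g' - g) * P2) by (apply Rmult_le_pos; lra).
  assert (D3 : 0 < g' * P1) by (apply Rmult_lt_0_compat; lra).
  assert (D4 : 0 < g' * P2) by (apply Rmult_lt_0_compat; lra).
  assert (D5 : 0 < g * P1) by (apply Rmult_lt_0_compat; lra).
  assert (D6 : 0 < g * P2) by (apply Rmult_lt_0_compat; lra).
  assert (G21m : gamma21 P1 P2 s1 g <= gamma21 P1 P2 s1 g').
  { unfold gamma21; apply div_le_compat; nra. }
  assert (G11m : gamma11 P1 s1 g <= gamma11 P1 s1 g').
  { unfold gamma11; apply div_le_compat; nra. }
  assert (G11'm : gamma11' P1 P2 s1 g <= gamma11' P1 P2 s1 g').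
  { unfold gamma11'; apply div_le_compat; nra. }
  assert (G11'le : gamma11' P1 P2 s1 g' <= gamma11 P1 s1 g').
  { unfold gamma11', gamma11; apply div_le_compat; nra. }
  assert (G11'le0 : gamma11' P1 P2 s1 g <= gamma11 P1 s1 g).
  { unfold gamma11', gamma11; apply div_le_compat; nra. }
  assert (B := epsQ_mono _ _ (INR N) R2 G21p G21m HNr HR2).
  assert (A := epsQ_mono _ _ (INR N) R1 G11p G11m HNr HR1).
  assert (C := epsQ_mono _ _ (INR N) R1 G11'p G11'm HNr HR1).
  assert (AC : eps11 (INR N) R1 P1 s1 g' <= eps11' (INR N) R1 P1 P2 s1 g').
  { apply epsQ_mono; try assumption. lra. }
  assert (AC0 : eps11 (INR N) R1 P1 s1 g <= eps11' (INR N) R1 P1 P2 s1 g).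
  { apply epsQ_mono; try assumption. }
  unfold T1, eps1.
  unfold eps21, eps11, eps11' in *.
  set (a := Qfun (ffun (gamma11 P1 s1 g) (INR N) R1)) in *.
  set (a' := Qfun (ffun (gamma11 P1 s1 g') (INR N) R1)) in *.
  set (b := Qfun (ffun (gamma21 P1 P2 s1 g) (INR N) R2)) in *.
  set (b' := Qfun (ffun (gamma21 P1 P2 s1 g') (INR N) R2)) in *.
  set (c := Qfun (ffun (gamma11' P1 P2 s1 g) (INR N) R1)) in *.
  set (c' := Qfun (ffun (gamma11' P1 P2 s1 g') (INR N) R1)) in *.
  assert (a1 : a <= 1) by apply Q_le1. assert (a0 : 0 <= a') by apply Q_ge0.
  assert (b1 : b <= 1) by apply Q_le1. assert (b0 : 0 <= b') by apply Q_ge0.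
  assert (c1 : c <= 1) by apply Q_le1. assert (c1' : c' <= 1) by apply Q_le1.
  apply Rmult_le_compat_l; [exact HR1|].
  assert (Hlog : log2 (1 + gamma11' P1 P2 s1 g) <= log2 (1 + gamma11' P1 P2 s1 g'))
    by (apply log2_mono; lra).
  destruct (Rle_dec R1 (log2 (1 + gamma11' P1 P2 s1 g))) as [H1|H1];
  destruct (Rle_dec R1 (log2 (1 + gamma11' P1 P2 s1 g'))) as [H2|H2].
  + (* a' + b'(c'-a') <= a + b(c-a) *)
    assert (b' * (c' - a') <= b * (c' - a')) by (apply Rmult_le_compat_r; lra).
    nra.
  + exfalso; lra.
  + assert (b' * (c' - a') <= b * (c' - a')) by (apply Rmult_le_compat_r; lra).
    nra.
  + assert (b' * (1 - a') <= b * (1 - a')) by (apply Rmult_le_compat_r; lra).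
    nra.
- intros g g' Hg Hgg'.
  assert (G22p : 0 < gamma22 P1 P2 s2 g) by (unfold gamma22; apply Rdiv_lt_0_compat; nra).
  assert (D2 : 0 <= (g' - g) * P2) by (apply Rmult_le_pos; lra).
  assert (D5 : 0 < g * P1) by (apply Rmult_lt_0_compat; lra).
  assert (D3 : 0 < g' * P1) by (apply Rmult_lt_0_compat; lra).
  assert (G22m : gamma22 P1 P2 s2 g <= gamma22 P1 P2 s2 g').
  { unfold gamma22; apply div_le_compat; nra. }
  unfold T2, Defs.eps2.
  apply Rmult_le_compat_l; [exact HR2|].
  pose proof (epsQ_mono _ _ (INR N) R2 G22p G22m HNr HR2). lra.
Qed.
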